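(* Let $a_1,\dots,a_n$ be nonzero integers and suppose the equation $$a_1x_1+\cdots+a_nx_n=0$$ is $r$-regular. Let $C$ be a positive constant. Then for every coloring of the positive integers $\mathbb{N}$ with $r$ colors, there exist positive integers $x_1,\dots,x_n$ satisfying $a_1x_1+\cdots+a_nx_n=0$ and a positive integer $d$ such that all the numbers $$x_i+\lambda d,\qquad 1\le i\le n,\ \lambda\in\mathbb{Z},\ |\lambda|\le C,$$ have the same color.
   Context: For a positive integer $r$, a linear homogeneous equation $a_1x_1+\cdots+a_nx_n=0$ with nonzero integer coefficients is called $r$-regular if for every coloring of the positive integers with $r$ colors there exist positive integers $x_1,\dots,x_n$, all of the same color, satisfying the equation. *)

(* Defs.v *)
From Stdlib Require Import ZArith List Reals.
Import ListNotations.
Open Scope Z_scope.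

Fixpoint lin_form (a x : list Z) : Z :=
  match a, x with
  | ai :: a', xi :: x' => ai * xi + lin_form a' x'
  | _, _ => 0
  end.

(* An r-coloring of the positive integers: c : Z -> nat with c x < r for x > 0
   (values at non-positive integers are irrelevant). *)
Definition coloring (r : nat) (c : Z -> nat) : Prop :=
  forall x, 0 < x -> (c x < r)%nat.

Definition r_regular (r : nat) (a : list Z) : Prop :=
  forall c : Z -> nat, coloring r c ->
    exists x : list Z,
      length x = length a /\ Forall (fun y => 0 < y) x /\
      lin_form a x = 0 /\
      exists k : nat, Forall (fun y => c y = k) x.

(* Main.v *)
Require Import Defs.
From Stdlib Require Import ZArith List Reals.
From Stdlib Require Import Lia Arith Factorial Classical ClassicalEpsilon Lra.
Open Scope Z_scope.

Module VDW.
Import ListNotations.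
Local Open Scope nat_scope.

Definition mono_ap {T} (c : nat -> T) (k a d : nat) : Prop :=
  forall i, i < k -> c (a + i * d) = c a.

Definition vdw (k : nat) : Prop :=
  forall (T : Type) (cols : list T), exists W, forall c : nat -> T,
    (forall t, In (c t) cols) ->
    exists a d, 0 < d /\ a + k * d <= W /\ mono_ap c k a d.

Fixpoint allseq {T} (m : nat) (cols : list T) : list (list T) :=
  match m with
  | 0 => [[]]
  | S m' => flat_map (fun x => map (cons x) (allseq m' cols)) cols
  end.

Lemma allseq_in {T} (cols : list T) : forall l,
  (forall x, In x l -> In x cols) -> In l (allseq (length l) cols).
Proof.
  induction l as [|x l IH]; intros H; simpl; auto.
  apply in_flat_map. exists x. split; [apply H; simpl; auto|].
  apply in_map. apply IH. intros y Hy; apply H; simpl; auto.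
Qed.

Lemma map_seq_eq {T} (g h : nat -> T) : forall m s,
  map g (seq s m) = map h (seq s m) -> forall t, s <= t < s + m -> g t = h t.
Proof.
  induction m as [|m IH]; intros s E t Ht; [lia|].
  simpl in E. injection E as E1 E2.
  destruct (Nat.eq_dec t s) as [->|Hn]; auto.
  apply (IH (S s)); auto; lia.
Qed.

Lemma pigeon {T} (cols : list T) (n : nat) (g : nat -> T) :
  (forall j, j < n -> In (g j) cols) ->
  (forall j j', j < n -> j' < n -> j <> j' -> g j <> g j') -> n <= length cols.
Proof.
  intros Hin Hd.
  replace n with (length (map g (seq 0 n))) by (rewrite length_map, length_seq; auto).
  apply NoDup_incl_length.
  - apply NoDup_map_NoDup_ForallPairs; [|apply seq_NoDup].
    intros x y Hx Hy E. apply in_seq in Hx, Hy.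
    destruct (Nat.eq_dec x y); auto. exfalso; apply (Hd x y); auto; lia.
  - intros z Hz. apply in_map_iff in Hz. destruct Hz as [j [<- Hj]].
    apply in_seq in Hj. apply Hin; lia.
Qed.

Lemma vdw1 : vdw 1.
Proof.
  intros T cols. exists 1. intros c _. exists 0, 1. split; [lia|split; [lia|]].
  intros i Hi. replace i with 0 by lia. reflexivity.
Qed.

Definition focus_prop (k : nat) (T : Type) (cols : list T) (s : nat) : Prop :=
  exists N, 0 < N /\ forall c : nat -> T, (forall t, In (c t) cols) ->
   (exists a d, 0 < d /\ a + S k * d <= 4 * N /\ mono_ap c (S k) a d) \/
   (exists f (A D : nat -> nat), f < 2 * N /\ forall j, j < s ->
      0 < D j /\ A j + k * D j = f /\ mono_ap c k (A j) (D j) /\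
      forall j', j' < s -> j' <> j -> c (A j') <> c (A j)).

Lemma focus0 k T cols : focus_prop k T cols 0.
Proof.
  exists 1. split; [lia|]. intros c _. right. exists 0, (fun _ => 0), (fun _ => 0).
  split; [lia|]. intros j Hj; lia.
Qed.

Lemma focus_step k T cols s : 1 <= k -> vdw k ->
  focus_prop k T cols s -> focus_prop k T cols (S s).
Proof.
  intros Hk Hv [N [HN HF]].
  destruct (Hv (list T) (allseq (2*N) cols)) as [M HM].
  exists (2 * N * (M + 1)). split; [nia|]. intros c Hc.
  set (pat := fun b => map (fun t => c (2*N*b + t)) (seq 0 (2*N))).
  destruct (HM pat) as [b0 [e [He [Hbe Hmono]]]].
  { intros b. unfold pat.
    replace (2*N) with (length (map (fun t => c (2*N*b + t)) (seq 0 (2*N)))) at 2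
      by (rewrite length_map, length_seq; auto).
    apply allseq_in. intros x Hx. apply in_map_iff in Hx. destruct Hx as [t [<- _]]. auto. }
  assert (blk : forall i t, i < k -> t < 2*N -> c (2*N*(b0 + i*e) + t) = c (2*N*b0 + t)).
  { intros i t Hi Ht. specialize (Hmono i Hi). unfold pat in Hmono.
    apply (map_seq_eq (fun t => c (2*N*(b0+i*e) + t)) (fun t => c (2*N*b0 + t)) (2*N) 0 Hmono).
    lia. }
  destruct (HF (fun t => c (2*N*b0 + t))) as [[a [d [Hd [Hb Hm]]]] | [f [A [D [Hf HA]]]]].
  { intros; auto. }
  - left. exists (2*N*b0 + a), d. split; [auto|split; [nia|]].
    intros i Hi. specialize (Hm i Hi). simpl in Hm.
    rewrite <- !Nat.add_assoc. exact Hm.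
  - destruct (classic (exists j, j < s /\ c (2*N*b0 + f) = c (2*N*b0 + A j))) as [[j [Hj Hcj]]|Hno].
    + left. destruct (HA j Hj) as [HD [HAf [Hm _]]].
      exists (2*N*b0 + A j), (D j). split; [auto|split; [nia|]].
      intros i Hi. destruct (Nat.eq_dec i k) as [->|Hik].
      * rewrite <- Nat.add_assoc, HAf. exact Hcj.
      * rewrite <- Nat.add_assoc. apply (Hm i). lia.
    + right. exists (2*N*(b0 + k*e) + f),
        (fun j => if Nat.eq_dec j s then 2*N*b0 + f else 2*N*b0 + A j),
        (fun j => if Nat.eq_dec j s then 2*N*e else D j + 2*N*e).
      split; [nia|]. intros j Hj.
      destruct (Nat.eq_dec j s) as [Hjs|Hjs].
      * split; [nia|split; [nia|split]].
        -- intros i Hi. rewrite <- (blk i f Hi Hf). f_equal. nia.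
        -- intros j' Hj' Hne. destruct (Nat.eq_dec j' s) as [|_]; [lia|].
           intros E. apply Hno. exists j'. split; [lia|auto].
      * assert (Hjs' : j < s) by lia.
        destruct (HA j Hjs') as [HD [HAf [Hm Hdist]]].
        split; [lia|split; [nia|split]].
        -- intros i Hi. rewrite <- (Hm i Hi).
           rewrite <- (blk i (A j + i * D j) Hi) by nia. f_equal. nia.
        -- intros j' Hj' Hne. destruct (Nat.eq_dec j' s) as [->|Hj's].
           ++ intros E. apply Hno. exists j. split; auto.
           ++ apply (Hdist j'); lia.
Qed.

Lemma focus_all k T cols s : 1 <= k -> vdw k -> focus_prop k T cols s.
Proof.
  intros Hk Hv. induction s; [apply focus0|apply focus_step; auto].
Qed.

Lemma vdw_step k : 1 <= k -> vdw k -> vdw (S k).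
Proof.
  intros Hk Hv T cols.
  destruct (focus_all k T cols (length cols) Hk Hv) as [N [HN HF]].
  exists (4*N). intros c Hc.
  destruct (HF c Hc) as [H|[f [A [D [Hf HA]]]]]; [exact H|].
  destruct (classic (exists j, j < length cols /\ c (A j) = c f)) as [[j [Hj E]]|Hno].
  - destruct (HA j Hj) as [HD [HAf [Hm _]]].
    exists (A j), (D j). split; [auto|split; [nia|]].
    intros i Hi. destruct (Nat.eq_dec i k) as [->|Hik].
    + rewrite HAf; auto.
    + apply Hm; lia.
  - exfalso.
    assert (P : S (length cols) <= length cols); [|lia].
    apply (pigeon cols (S (length cols))
      (fun j => if Nat.eq_dec j (length cols) then c f else c (A j))).
    + intros j _. destruct (Nat.eq_dec j (length cols)); auto.
    + intros j j' Hj Hj' Hne.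
      destruct (Nat.eq_dec j (length cols)) as [->|H1];
      destruct (Nat.eq_dec j' (length cols)) as [->|H2]; try lia.
      * intros E; apply Hno; exists j'; split; [lia|auto].
      * intros E; apply Hno; exists j; split; [lia|auto].
      * destruct (HA j' ltac:(lia)) as [_ [_ [_ Hd]]]. apply Hd; lia.
Qed.

Theorem vdw_all k : 1 <= k -> vdw k.
Proof.
  induction k; intros Hk; [lia|].
  destruct k; [apply vdw1|]. apply vdw_step; [lia|apply IHk; lia].
Qed.
End VDW.
Import VDW.
Open Scope Z_scope.

Definition bad (a : list Z) (M : Z) (c : Z -> nat) : Prop :=
  ~ exists x, length x = length a /\ Forall (fun y => 0 < y <= M) x /\
      lin_form a x = 0 /\ exists k, Forall (fun y => c y = k) x.

Definition upd (p : Z -> nat) (m : Z) (k : nat) : Z -> nat :=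
  fun y => if Z.eq_dec y m then k else p y.

Definition extendable (r : nat) (a : list Z) (p : Z -> nat) (n : nat) : Prop :=
  forall M : nat, (n <= M)%nat -> exists c', coloring r c' /\
    (forall y, 0 < y <= Z.of_nat n -> c' y = p y) /\ bad a (Z.of_nat M) c'.

Lemma bad_mono a M M' c : M' <= M -> bad a M c -> bad a M' c.
Proof.
  intros HM Hb [x [H1 [H2 H3]]]. apply Hb. exists x. split; auto. split; auto.
  eapply Forall_impl; [|exact H2]. simpl; intros; lia.
Qed.

Lemma bad_agree a M c c' : (forall y, 0 < y <= M -> c' y = c y) -> bad a M c' -> bad a M c.
Proof.
  intros Hag Hb [x [H1 [H2 [H3 [k H4]]]]]. apply Hb. exists x. split; auto. split; auto.
  split; auto. exists k. rewrite Forall_forall in *. intros y Hy.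
  rewrite Hag; auto.
Qed.

Lemma bound_fin (P : nat -> nat -> Prop) r :
  (forall k, (k < r)%nat -> exists m, P k m) ->
  exists B, forall k, (k < r)%nat -> exists m, (m <= B)%nat /\ P k m.
Proof.
  induction r; intros H.
  - exists 0%nat. intros; lia.
  - destruct IHr as [B HB]. { intros k Hk; apply H; lia. }
    destruct (H r ltac:(lia)) as [m Hm].
    exists (Nat.max B m). intros k Hk.
    destruct (Nat.eq_dec k r) as [->|Hne].
    + exists m; split; auto; lia.
    + destruct (HB k ltac:(lia)) as [m' [Hm' Hp]]. exists m'; split; auto; lia.
Qed.

Lemma ext_step r a p n : (0 < r)%nat -> extendable r a p n ->
  exists k, (k < r)%nat /\ extendable r a (upd p (Z.of_nat (S n)) k) (S n).
Proof.
  intros Hr Hext. apply NNPP. intros Hno.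
  assert (H : forall k, (k < r)%nat -> exists m,
     (S n <= m)%nat /\ ~ exists c', coloring r c' /\
       (forall y, 0 < y <= Z.of_nat (S n) -> c' y = upd p (Z.of_nat (S n)) k y) /\
       bad a (Z.of_nat m) c').
  { intros k Hk. apply NNPP. intros H1. apply Hno. exists k. split; auto.
    intros M HM. apply NNPP. intros H2. apply H1. exists M. auto. }
  destruct (bound_fin _ r H) as [B HB].
  destruct (Hext (Nat.max B (S n)) ltac:(lia)) as [c' [Hcol [Hag Hbad]]].
  assert (Hk : (c' (Z.of_nat (S n)) < r)%nat) by (apply Hcol; lia).
  destruct (HB _ Hk) as [m [HmB [Hmn Hnot]]].
  apply Hnot. exists c'. split; auto. split.
  - intros y Hy. unfold upd. destruct (Z.eq_dec y (Z.of_nat (S n))) as [->|Hne]; auto.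
    apply Hag. lia.
  - eapply bad_mono; [|exact Hbad]. lia.
Qed.

Lemma compactness r a : (0 < r)%nat -> r_regular r a ->
  exists M : nat, forall c, coloring r c -> ~ bad a (Z.of_nat M) c.
Proof.
  intros Hr Hreg. apply NNPP. intros Hno.
  assert (H0 : extendable r a (fun _ => 0%nat) 0).
  { intros M _. apply NNPP. intros H. apply Hno. exists M. intros c Hc Hb.
    apply H. exists c. split; auto. split; auto. intros; lia. }
  assert (Hch : forall p n, exists k, extendable r a p n ->
     (k < r)%nat /\ extendable r a (upd p (Z.of_nat (S n)) k) (S n)).
  { intros p n. destruct (classic (extendable r a p n)) as [He|He].
    - destruct (ext_step r a p n Hr He) as [k Hk]. exists k; auto.
    - exists 0%nat; intros; contradiction. }
  destruct (choice (fun (pn : (Z -> nat) * nat) k => extendable r a (fst pn) (snd pn) ->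
     (k < r)%nat /\ extendable r a (upd (fst pn) (Z.of_nat (S (snd pn))) k) (S (snd pn))))
    as [ch Hch2].
  { intros [p n]. apply Hch. }
  set (F := fix F (n : nat) : Z -> nat :=
     match n with O => fun _ => 0%nat | S n' => upd (F n') (Z.of_nat n) (ch (F n', n')) end).
  assert (HFS : forall n y, F (S n) y = upd (F n) (Z.of_nat (S n)) (ch (F n, n)) y) by reflexivity.
  assert (HFe : forall n, extendable r a (F n) n).
  { induction n; [exact H0|]. apply (Hch2 (F n, n) IHn). }
  assert (HFs : forall n m y, (m <= n)%nat -> 0 < y <= Z.of_nat m -> F n y = F m y).
  { induction n; intros m y Hmn Hy.
    - replace m with 0%nat by lia. reflexivity.
    - destruct (Nat.eq_dec m (S n)) as [->|Hne]; auto.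
      rewrite HFS. unfold upd. destruct (Z.eq_dec y (Z.of_nat (S n))); [lia|].
      apply IHn; lia. }
  set (cs := fun y => F (Z.to_nat y) y).
  assert (Hcs : coloring r cs).
  { intros y Hy. unfold cs. destruct (Z.to_nat y) as [|n] eqn:E; [lia|].
    rewrite HFS. unfold upd. destruct (Z.eq_dec y (Z.of_nat (S n))) as [_|Hne]; [|lia].
    apply (Hch2 (F n, n) (HFe n)). }
  destruct (Hreg cs Hcs) as [x [Hl [Hpos [Hlin Hk]]]].
  assert (Hbd : exists N : nat, Forall (fun y => y <= Z.of_nat N) x).
  { clear -x. induction x as [|y x [N HN]]; [exists 0%nat; constructor|].
    exists (Nat.max N (Z.to_nat y)). constructor; [lia|].
    eapply Forall_impl; [|exact HN]. simpl; intros; lia. }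
  destruct Hbd as [N HN].
  destruct (HFe N N (le_n _)) as [c' [_ [Hag Hbad]]].
  apply Hbad. exists x. split; auto. split.
  - rewrite Forall_forall in *. intros y Hy. split; auto.
  - split; auto. destruct Hk as [k Hk]. exists k.
    rewrite Forall_forall in *. intros y Hy. rewrite Hag by (split; [apply Hpos|apply HN]; auto).
    rewrite <- (Hk y Hy). unfold cs. pose proof (HN y Hy). pose proof (Hpos y Hy). apply HFs; lia.
Qed.


Lemma div_fact : forall M j, (1 <= j <= M)%nat -> Nat.divide j (fact M).
Proof.
  induction M; intros j Hj; [lia|].
  destruct (Nat.eq_dec j (S M)) as [->|Hne].
  - simpl fact. exists (fact M). lia.
  - destruct (IHM j ltac:(lia)) as [q Hq]. exists (S M * q)%nat.
    change (fact (S M)) with (S M * fact M)%nat. rewrite Hq. lia.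
Qed.

Lemma lin_form_scale a : forall x u, lin_form a (map (fun y => y * u) x) = lin_form a x * u.
Proof.
  induction a as [|ai a IH]; intros [|xi x] u; simpl; try ring.
  rewrite IH. ring.
Qed.

Theorem lemma1 (r : nat) (a : list Z) (C : R) :
  (0 < r)%nat ->
  Forall (fun ai => ai <> 0) a ->
  r_regular r a ->
  (0 < C)%R ->
  forall c : Z -> nat, coloring r c ->
    exists (x : list Z) (d : Z),
      length x = length a /\ Forall (fun y => 0 < y) x /\
      lin_form a x = 0 /\ 0 < d /\
      exists k : nat,
        forall xi lam, In xi x -> (Rabs (IZR lam) <= C)%R ->
          0 < xi + lam * d /\ c (xi + lam * d) = k.
Proof.
  intros Hr _ Hreg HC c Hc.
  destruct (compactness r a Hr Hreg) as [M HM].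
  set (L := Z.to_nat (up C)).
  set (F := fact M).
  set (K := (2 * L * F + 1)%nat).
  destruct (vdw_all K ltac:(lia) (list nat) (allseq M (seq 0 r))) as [W HW].
  set (g := fun t : nat => map (fun j : nat => c (Z.of_nat j * Z.of_nat (S t))) (seq 1 M)).
  destruct (HW g) as [a0 [d0 [Hd0 [_ Hmono]]]].
  { intros t. unfold g.
    replace M with (length (map (fun j : nat => c (Z.of_nat j * Z.of_nat (S t))) (seq 1 M))) at 2
      by (rewrite length_map, length_seq; auto).
    apply allseq_in. intros z Hz. apply in_map_iff in Hz. destruct Hz as [j [<- Hj]].
    apply in_seq in Hj. apply in_seq. split; [lia|]. simpl. apply Hc. lia. }
  assert (Hv : forall i j, (i < K)%nat -> (1 <= j <= M)%nat ->
     c (Z.of_nat j * Z.of_nat (S (a0 + i * d0))) = c (Z.of_nat j * Z.of_nat (S a0))).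
  { intros i j Hi Hj. specialize (Hmono i Hi). unfold g in Hmono.
    apply (map_seq_eq (fun j => c (Z.of_nat j * Z.of_nat (S (a0 + i * d0))))
      (fun j => c (Z.of_nat j * Z.of_nat (S a0))) M 1 Hmono). lia. }
  set (h := fun y => c (y * Z.of_nat (S a0))).
  assert (Hh : coloring r h) by (intros y Hy; apply Hc; lia).
  pose proof (HM h Hh) as Hsol. apply NNPP in Hsol.
  destruct Hsol as [x [Hl [Hx [Hlin [k Hk]]]]].
  set (U := Z.of_nat (S (a0 + L * F * d0))).
  exists (map (fun y => y * U) x), (Z.of_nat (F * d0)).
  split; [rewrite length_map; auto|].
  rewrite Forall_forall in Hx, Hk.
  split.
  { rewrite Forall_forall. intros z Hz. apply in_map_iff in Hz. destruct Hz as [y [<- Hy]].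
    specialize (Hx y Hy). unfold U. nia. }
  split; [rewrite lin_form_scale, Hlin; ring|].
  assert (HF0 : (0 < F)%nat) by apply lt_O_fact.
  split; [nia|].
  exists k. intros xi lam Hxi Hlam.
  apply in_map_iff in Hxi. destruct Hxi as [y [<- Hy]].
  destruct (Hx y Hy) as [Hy0 HyM]. specialize (Hk y Hy). unfold h in Hk.
  assert (Hlam' : Z.abs lam < up C).
  { destruct (archimed C) as [H1 _]. apply lt_IZR. rewrite <- Rabs_Zabs. lra. }
  assert (HupC : 0 < up C) by lia.
  assert (HLz : Z.of_nat L = up C) by (unfold L; lia).
  destruct (div_fact M (Z.to_nat y) ltac:(lia)) as [q Hq].
  fold F in Hq.
  assert (HqZ : Z.of_nat F = Z.of_nat q * y) by lia.
  set (iz := Z.of_nat L * Z.of_nat F + lam * Z.of_nat q).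
  assert (Hq0 : 0 <= Z.of_nat q <= Z.of_nat F) by nia.
  assert (Hiz : 0 <= iz <= 2 * Z.of_nat L * Z.of_nat F).
  { unfold iz. split; nia. }
  assert (Hkey : y * U + lam * Z.of_nat (F * d0) =
      Z.of_nat (Z.to_nat y) * Z.of_nat (S (a0 + Z.to_nat iz * d0))).
  { unfold U. rewrite ?Nat2Z.inj_succ, ?Nat2Z.inj_add, ?Nat2Z.inj_mul.
    rewrite Z2Nat.id, Z2Nat.id by lia. unfold iz. rewrite HqZ. unfold Z.succ. ring. }
  assert (HK : K = (2 * L * F + 1)%nat) by reflexivity. clearbody iz U L F K h g.
  rewrite Hkey. split. { apply Z.mul_pos_pos; lia. }
  rewrite Hv. 2:{ lia. } 2: lia. rewrite Z2Nat.id by lia. exact Hk.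
Qed.
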